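(* Let $M$ be a finitary matroid on $E$, $B$ a base of $M$, and $H\subseteq E\setminus B$ such that $\kappa:=|H|$ is an uncountable regular cardinal. Suppose there is $B'\subseteq B$ with $|B'|<\kappa$ such that $C_M(e,B)\cap B'\neq\emptyset$ for every $e\in H$. Then there exist $e^*\in H$ and a $\Delta$-system $\mathcal{D}$ of $\kappa$ many circuits of $M$ with kernel $K$ such that $\bigcup\mathcal{D}\subseteq\bigcup_{e\in H}C_M(e,B)$ and $e^*\in K\subseteq C_M(e^*,B)\setminus B'$.
   Context: $C_M(e,B)$ is the fundamental circuit of $e\notin B$ on the base $B$ (the unique circuit in $B\cup\{e\}$). A $\Delta$-system is a family of (at least two) sets any two of which have the same intersection $K$, called its kernel; the sets $C\setminus K$ for members $C$ are its petals. *)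

(* Defs.v *)
(* sets are [set E] over an arbitrary type E
   (the ground set of the matroid is the whole type E). *)
From HB Require Import structures.
From mathcomp Require Import all_boot all_order.
From mathcomp Require Import boolp classical_sets cardinality.

Set Implicit Arguments.
Unset Strict Implicit.
Unset Printing Implicit Defensive.

Local Open Scope classical_set_scope.
Local Open Scope card_scope.

Definition card_lt T U (A : set T) (B : set U) : Prop := A #<= B /\ ~ (B #<= A).

(* Matroids on the ground set E (whole type), via the independence axioms
   (I1)-(I4) of Bruhn, Diestel, Kriesell, Pendavingh, Wollan. *)
Section Matroid.
Variable E : Type.
Variable indep : set E -> Prop.

Definition maximal_indep (I : set E) : Prop :=
  indep I /\ forall J, indep J -> I `<=` J -> J = I.

Definition matroid_axioms : Prop :=
  [/\ indep set0,
      (forall I J, indep J -> I `<=` J -> indep I),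
      (forall I J, indep I -> ~ maximal_indep I -> maximal_indep J ->
          exists2 x, (J `\` I) x & indep (x |` I)) &
      (forall I X, indep I -> I `<=` X ->
          exists2 J, [/\ indep J, I `<=` J & J `<=` X] &
            forall J', indep J' -> J `<=` J' -> J' `<=` X -> J' = J)].

Definition is_circuit (C : set E) : Prop :=
  ~ indep C /\ forall D, D `<=` C -> ~ indep D -> D = C.

Definition finitary : Prop := forall C, is_circuit C -> finite_set C.
End Matroid.

Record finitary_matroid (E : Type) := FinitaryMatroid {
  indep : set E -> Prop;
  indep_axioms : matroid_axioms indep;
  indep_finitary : finitary indep }.

Definition base E (M : finitary_matroid E) (B : set E) := maximal_indep (indep M) B.
Definition circuit E (M : finitary_matroid E) (C : set E) := is_circuit (indep M) C.

(* C_M(e,B): the (unique, when B is a base and e \notin B) circuit contained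
   in B + e; chosen by Hilbert's epsilon. *)
Definition fcirc E (M : finitary_matroid E) (e : E) (B : set E) : set E :=
  xget set0 (fun C => circuit M C /\ C `<=` e |` B).

Definition delta_system E (D : set (set E)) (K : set E) : Prop :=
  (exists C1 C2, [/\ D C1, D C2 & C1 <> C2]) /\
  (forall C1 C2, D C1 -> D C2 -> C1 <> C2 -> C1 `&` C2 = K).

Definition uncountable E (H : set E) : Prop := ~ countable H.
Definition regular_card E (H : set E) : Prop :=
  forall (I : Type) (F : I -> set E),
    card_lt [set: I] H -> (forall i, F i `<=` H /\ card_lt (F i) H) ->
    card_lt (\bigcup_i F i) H.

(* Main.v *)
Require Import Defs.
From HB Require Import structures.
From mathcomp Require Import all_boot all_order.
From mathcomp Require Import boolp classical_sets cardinality.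
From mathcomp Require Import finmap functions.
From mathcomp Require Import zify.

Set Implicit Arguments.
Unset Strict Implicit.
Unset Printing Implicit Defensive.

Local Open Scope classical_set_scope.
Local Open Scope card_scope.


Section Size.
Variable T : choiceType.
Definition sz (A : set T) := #|` fset_set A|.

Lemma sz_sub (A B : set T) : finite_set B -> A `<=` B -> (sz A <= sz B)%N.
Proof.
move=> fB AB; have fA := sub_finite_set AB fB.
by apply: fsubset_leq_card; rewrite -fset_set_sub.
Qed.

Lemma sz_D1 (A : set T) x : finite_set A -> A x -> sz A = (sz (A `\ x)).+1.
Proof.
move=> fA Ax; rewrite /sz fset_setD1 // (cardfsD1 x (fset_set A)).
by rewrite in_fset_set // (mem_set Ax) add1n.
Qed.

Lemma sz_U1 (A : set T) x : finite_set A -> (sz (x |` A) <= (sz A).+1)%N.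
Proof.
move=> fA; rewrite /sz fset_setU1 // cardfsU1.
by case: (x \in fset_set A).
Qed.

Lemma sz0 (A : set T) : finite_set A -> sz A = 0%N -> A = set0.
Proof. by move=> fA /cardfs0_eq; apply: fset_set_set0. Qed.
End Size.

Lemma sz_fset (T : choiceType) (F : {fset T}) : sz [set` F] = #|` F|.
Proof. by rewrite /sz set_fsetK. Qed.


Section Mat.
Variable T : choiceType.
Variable ind : set T -> Prop.
Hypothesis ax : matroid_axioms ind.

Lemma ind0 : ind set0. Proof. by case: ax. Qed.
Lemma indS I J : ind J -> I `<=` J -> ind I.
Proof. by case: ax => _ h _ _; apply: h. Qed.
Arguments indS {I J}.
Lemma indI3 I J : ind I -> ~ maximal_indep ind I -> maximal_indep ind J ->
  exists2 x, (J `\` I) x & ind (x |` I).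
Proof. by case: ax => _ _ h _; apply: h. Qed.
Lemma indI4 I X : ind I -> I `<=` X ->
  exists2 J, [/\ ind J, I `<=` J & J `<=` X] &
    forall J', ind J' -> J `<=` J' -> J' `<=` X -> J' = J.
Proof. by case: ax => _ _ _ h; apply: h. Qed.

Lemma ext_base I : ind I -> exists2 B, maximal_indep ind B & I `<=` B.
Proof.
move=> hI; have [J [hJ IJ _] mJ] := indI4 hI (@subsetT _ I).
by exists J => //; split => // J' hJ' JJ'; apply: mJ.
Qed.

Lemma base_step B1 B2 : maximal_indep ind B1 -> maximal_indep ind B2 ->
  (B2 `\` B1) !=set0 ->
  exists x y W, [/\ (B1 `\` B2) x, (B2 `\` B1) y, maximal_indep ind W,
     B1 `\` W `<=` (B1 `\` B2) `\ x & B2 `\` B1 `<=` y |` (W `\` B1)].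
Proof.
move=> [iB1 mB1] [iB2 mB2] [y [B2y nB1y]].
have iB2y : ind (B2 `\ y) by apply: indS iB2 _; apply: subDsetl.
have nm : ~ maximal_indep ind (B2 `\ y).
  move=> [_ m]; have E := m _ iB2 (@subDsetl _ _ _).
  have : (B2 `\ y) y by rewrite -E.
  by move=> [_]; apply.
have [x [B1x nx] ix] := indI3 iB2y nm (conj iB1 mB1).
have xy : x <> y by move=> exy; apply: nB1y; rewrite -exy.
have nB2x : ~ B2 x by move=> B2x; apply: nx; split => //.
have [W mW sW] := ext_base ix.
have nWy : ~ W y.
  move=> Wy; have : ind (x |` B2).
    apply: indS (proj1 mW) _ => z [->|B2z]; first by apply: sW; left.
    by have [->//|zy] := pselect (z = y); apply: sW; right.
  move=> ixB2; have E := mB2 _ ixB2 (fun z h => or_intror h).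
  by apply: nB2x; rewrite -E; left.
exists x, y, W; split => //.
- move=> z [B1z nWz]; split; last by move=> zx; apply: nWz; rewrite zx; apply: sW; left.
  split => // B2z; have [zy|zy] := pselect (z = y); first by apply: nB1y; rewrite -zy.
  by apply: nWz; apply: sW; right.
- move=> z [B2z nB1z]; have [->|zy] := pselect (z = y); first by left.
  by right; split => //; apply: sW; right.
Qed.

Lemma base_diff n : forall B1 B2, maximal_indep ind B1 -> maximal_indep ind B2 ->
  finite_set (B1 `\` B2) -> (sz (B1 `\` B2) <= n)%N ->
  finite_set (B2 `\` B1) /\ (sz (B2 `\` B1) <= sz (B1 `\` B2))%N.
Proof.
elim: n => [|n IH] B1 B2 m1 m2 f12 hn.
  have [ne|e] := pselect ((B2 `\` B1) !=set0).
    have [x [y [W [h1 _ _ _ _]]]] := base_step m1 m2 ne.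
    by move: hn; rewrite leqn0 => /eqP /(sz0 f12) E; move: h1; rewrite E.
  have E : B2 `\` B1 = set0 by apply/seteqP; split => // z hz; apply: e; exists z.
  by rewrite E /sz fset_set0 cardfs0; split => //; exact: finite_set0.
have [ne|e] := pselect ((B2 `\` B1) !=set0); last first.
  have E : B2 `\` B1 = set0 by apply/seteqP; split => // z hz; apply: e; exists z.
  by rewrite E /sz fset_set0 cardfs0; split => //; exact: finite_set0.
have [x [y [W [h1 h2 mW s1 s2]]]] := base_step m1 m2 ne.
have f1W : finite_set (B1 `\` W).
  by apply: sub_finite_set s1 _; apply: finite_setD.
have le1 : (sz (B1 `\` W) < sz (B1 `\` B2))%N.
  by rewrite (sz_D1 f12 h1) ltnS; apply: sz_sub => //; apply: finite_setD.
have hle : (sz (B1 `\` W) <= n)%N by rewrite -ltnS (leq_trans le1 hn).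
have [fW1 leW] := IH _ _ m1 mW f1W hle.
have fU : finite_set (y |` (W `\` B1)) by rewrite finite_setU; split => //; exact: finite_set1.
split; first exact: sub_finite_set s2 fU.
apply: (leq_trans (sz_sub fU s2)); apply: (leq_trans (sz_U1 _ fW1)).
by apply: leq_trans le1; rewrite ltnS.
Qed.


Lemma augment (I J : {fset T}) : ind [set` I] -> ind [set` J] -> (#|` I| < #|` J|)%N ->
  exists x, [/\ x \in J, x \notin I & ind (x |` [set` I])].
Proof.
move=> iI iJ lt; have [BJ mBJ sJ] := ext_base iJ.
have [T0 [iT0 sIT0 sT0X] mT0] := indI4 iI (@subsetUl _ [set` I] BJ).
have mx : maximal_indep ind T0.
  have [//|nmx] := pselect (maximal_indep ind T0).
  have [z [BJz nT0z] iz] := indI3 iT0 nmx mBJ; exfalso.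
  have E := mT0 _ iz (fun w h => or_intror h).
  have : (z |` T0) `<=` [set` I] `|` BJ.
    by move=> w [->|]; [right|apply: sT0X].
  by move=> /E E'; apply: nT0z; rewrite -E'; left.
have sD : T0 `\` BJ `<=` [set` (I `\` J)%fset].
  move=> z [T0z nBJz]; have [Iz|//] := sT0X _ T0z.
  rewrite /= inE; apply/andP; split; last by [].
  by apply/negP => Jz; apply: nBJz; apply: sJ.
have fD : finite_set (T0 `\` BJ) by apply: sub_finite_set sD (finite_fset _).
have [fD2 le2] := @base_diff _ T0 BJ mx mBJ fD (leqnn _).
have le3 : (sz (T0 `\` BJ) <= #|` (I `\` J)%fset|)%N.
  by rewrite -sz_fset; apply: sz_sub => //; exact: finite_fset.
apply: contrapT => nex.
have sD2 : [set` (J `\` I)%fset] `<=` BJ `\` T0.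
  move=> z /=; rewrite inE => /andP [nIz Jz]; split; first exact: sJ.
  move=> T0z; apply: nex; exists z; split => //.
  have hs : z |` [set` I] `<=` T0 by move=> w [->//|]; exact: sIT0.
  exact: indS iT0 hs.
have le4 := sz_sub fD2 sD2; rewrite sz_fset in le4.
have h1 := cardfsID I J; have h2 := cardfsID J I; rewrite fsetIC in h2.
lia.
Qed.

Local Notation circ C := (is_circuit ind [set` C]).

Lemma set_fset_inj (A B : {fset T}) : [set` A] = [set` B] -> A = B.
Proof.
move=> E; apply/fsetP => z; apply/idP/idP => h.
  by have : [set` A] z by []; rewrite E.
by have : [set` B] z by []; rewrite -E.
Qed.

Lemma card_lt_sub (A B : {fset T}) a : a \in B -> (A `<=` B `\ a)%fset ->
  (#|` A| < #|` B|)%N.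
Proof.
move=> aB sA; have := fsubset_leq_card sA; rewrite [#|` B|](cardfsD1 a) aB.
by rewrite add1n ltnS.
Qed.

Lemma circ_proper (C D : {fset T}) : circ C -> (D `<` C)%fset -> ind [set` D].
Proof.
move=> [nC mC] pD; apply: contrapT => nD.
have E := mC _ (fun z (h : z \in D) => fsubsetP (fproper_sub pD) z h) nD.
by move: (fproper_neq pD); rewrite (set_fset_inj E) eqxx.
Qed.

Lemma circuit_in (X : {fset T}) : ~ ind [set` X] ->
  exists C : {fset T}, (C `<=` X)%fset /\ circ C.
Proof.
have [n] := ubnP #|`X|; elim: n X => // n IH X ltX nX.
have [[Y [pY nY]]|none] :=
  pselect (exists Y : {fset T}, (Y `<` X)%fset /\ ~ ind [set` Y]).
  have ltY : (#|` Y| < n)%N by move: (fproper_ltn_card pY) ltX; lia.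
  have [C [sC cC]] := IH Y ltY nY.
  by exists C; split => //; exact: fsubset_trans sC (fproper_sub pY).
exists X; split => //; split => // D sD nD.
have fD : finite_set D := sub_finite_set sD (finite_fset X).
have DY : D = [set` fset_set D] by rewrite fset_setK.
have [eYX|neYX] := eqVneq (fset_set D) X; first by rewrite DY eYX.
exfalso; apply: none; exists (fset_set D); split; last by rewrite -DY.
rewrite fproperEneq neYX /=; apply/fsubsetP => z; rewrite in_fset_set // => zD.
by have := sD z (set_mem zD).
Qed.

Lemma weak_elim (C1 C2 : {fset T}) x : circ C1 -> circ C2 -> C1 != C2 ->
  x \in C1 -> x \in C2 -> ~ ind [set` ((C1 `|` C2) `\ x)%fset].
Proof.
move=> c1 c2 ne x1 x2 iU; have [nC1 mC1] := c1; have [nC2 mC2] := c2.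
have [y y2 ny1] : exists2 y, y \in C2 & y \notin C1.
  apply/fsubsetPn/negP => s21.
  have E := mC1 _ (fun z (h : z \in C2) => fsubsetP s21 z h) nC2.
  by move: ne; rewrite (set_fset_inj E) eqxx.
set U := (C1 `|` C2)%fset.
have pC2 : (C2 `\ y `<` C2)%fset.
  by rewrite fproperEneq fsubD1set andbT; apply/eqP => /fsetP /(_ y); rewrite fsetD11 y2.
have iI := circ_proper c2 pC2.
have sIU : [set` (C2 `\ y)%fset] `<=` [set` U].
  by move=> z /=; rewrite !inE => /andP [_ ->]; rewrite orbT.
have [J [iJ sJ1 sJU] mJ] := indI4 iI sIU.
have fJ : finite_set J := sub_finite_set sJU (finite_fset U).
have EJ : J = [set` fset_set J] by rewrite fset_setK.
have nJy : ~ J y.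
  move=> Jy; apply: nC2; apply: (indS iJ) => z /= z2.
  have [->//|zy] := eqVneq z y; apply: sJ1 => /=; rewrite !inE zy z2.
  by [].
have [z z1 nJz] : exists2 z, z \in C1 & ~ J z.
  apply: contrapT => h; apply: nC1; apply: (indS iJ) => w /= w1.
  by apply: contrapT => nw; apply: h; exists w.
have zy : z != y by apply/eqP => ezy; move: ny1; rewrite -ezy z1.
have sFJ : (fset_set J `<=` (U `\ y) `\ z)%fset.
  apply/fsubsetP => w; rewrite in_fset_set // => /set_mem Jw.
  apply/fsetD1P; split; first by apply/eqP => e; subst w.
  apply/fsetD1P; split; first by apply/eqP => e; subst w.
  exact: sJU w Jw.
have xU : x \in U by rewrite !inE x1.
have yU : y \in U by rewrite !inE y2 orbT.
have zU : z \in U by rewrite /U !inE z1.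
have zUy : z \in (U `\ y)%fset by apply/fsetD1P; split.
have lt1 := card_lt_sub zUy sFJ.
have lt2 : (#|` fset_set J| < #|` (U `\ x)%fset|)%N.
  have h1 := cardfsD1 y U; have h2 := cardfsD1 x U.
  rewrite yU in h1; rewrite xU in h2; lia.
have iJ' : ind [set` fset_set J] by rewrite -EJ.
have [w [wU nwJ iw]] := augment iJ' iU lt2.
rewrite -EJ in iw.
have E := mJ _ iw (fun a h => or_intror h).
have : (w |` J) `<=` [set` U].
  move=> a [->|]; last exact: sJU.
  by move: wU => /=; rewrite !inE => /andP [].
move=> /E E'; move: nwJ; rewrite in_fset_set // => /negP; apply.
by apply/mem_set; rewrite -E'; left.
Qed.

Lemma strong_elim (C1 C2 : {fset T}) x y : circ C1 -> circ C2 ->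
  x \in C1 -> x \in C2 -> y \in C1 -> y \notin C2 ->
  exists C3 : {fset T}, [/\ circ C3, (C3 `<=` (C1 `|` C2) `\ x)%fset & y \in C3].
Proof.
have [n] := ubnP #|` (C1 `|` C2)%fset|; elim: n C1 C2 x y => // n IH C1 C2 x y ltn
  c1 c2 x1 x2 y1 ny2.
have ne : C1 != C2 by apply/eqP => e; move: ny2; rewrite -e y1.
have [C3 [s3 c3]] := circuit_in (weak_elim c1 c2 ne x1 x2).
have [y3|ny3] := boolP (y \in C3); first by exists C3.
have x3 : x \notin C3.
  by apply/negP => /(fsubsetP s3); rewrite !inE eqxx.
have [z z3 nz1] : exists2 z, z \in C3 & z \notin C1.
  apply/fsubsetPn/negP => s31; have [_ mC1] := c1; have [nC3 _] := c3.
  have E := mC1 _ (fun w (h : w \in C3) => fsubsetP s31 w h) nC3.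
  by move: x3; rewrite (set_fset_inj E) x1.
have z2 : z \in C2.
  by move: (fsubsetP s3 z z3); rewrite !inE (negbTE nz1) /= => /andP [].
have lt23 : (#|` (C2 `|` C3)%fset| < n)%N.
  have h : (C2 `|` C3 `<=` (C1 `|` C2) `\ y)%fset.
    apply/fsubsetP => w; rewrite !inE => /orP [w2|w3].
      by rewrite w2 orbT andbT; apply/eqP => e; move: ny2; rewrite -e w2.
    have := fsubsetP s3 w w3; rewrite !inE => /andP [_ ->]; rewrite andbT.
    by apply/eqP => e; move: ny3; rewrite -e w3.
  have yU : y \in (C1 `|` C2)%fset by rewrite !inE y1.
  have := card_lt_sub yU h; move: ltn; clear; lia.
have [C4 [c4 s4 x4]] := IH _ _ _ _ lt23 c2 c3 z2 z3 x2 x3.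
have ny4 : y \notin C4.
  apply/negP => /(fsubsetP s4); rewrite !inE => /andP [_ /orP [] h].
    by move: ny2; rewrite h.
  by move: ny3; rewrite h.
have lt14 : (#|` (C1 `|` C4)%fset| < n)%N.
  have h : (C1 `|` C4 `<=` (C1 `|` C2) `\ z)%fset.
    apply/fsubsetP => w; rewrite !inE => /orP [w1|w4].
      by rewrite w1 andbT; apply/eqP => e; move: nz1; rewrite -e w1.
    have := fsubsetP s4 w w4; rewrite !inE => /andP [wz /orP [->|w3]].
      by rewrite wz orbT.
    by rewrite wz andTb; move: (fsubsetP s3 w w3); rewrite !inE => /andP [_ ->].
  have zU : z \in (C1 `|` C2)%fset by rewrite !inE z2 orbT.
  have := card_lt_sub zU h; move: ltn; clear; lia.
have [C5 [c5 s5 y5]] := IH _ _ _ _ lt14 c1 c4 x1 x4 y1 ny4.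
exists C5; split => //; apply/fsubsetP => w /(fsubsetP s5); rewrite !inE.
move=> /andP [wx /orP [w1|w4]]; first by rewrite wx w1.
have := fsubsetP s4 w w4; rewrite !inE => /andP [_ /orP [->|w3]].
  by rewrite wx orbT.
by move: (fsubsetP s3 w w3); rewrite !inE => /andP [_ ->]; rewrite wx.
Qed.

End Mat.


Lemma card_le_fun (U V : Type) (X : set U) (Y : set V) (y0 : V) : X #<= Y ->
  exists f : U -> V, (forall u, X u -> Y (f u)) /\
    (forall u1 u2, X u1 -> X u2 -> f u1 = f u2 -> u1 = u2).
Proof.
move=> /card_leP /injfunPex [g _ ig].
pose f u := if pselect (X u) is left h then set_val (g (SigSub (mem_set h))) else y0.
exists f; split.
  by move=> u Xu; rewrite /f; case: pselect => // h; exact: set_valP.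
move=> u1 u2 X1 X2; rewrite /f; case: pselect => // h1; case: pselect => // h2.
move=> /val_inj /ig => /(_ (mem_set I) (mem_set I)) E.
by have := congr1 set_val E.
Qed.

Section Card.
Variables (T : choiceType) (H : set T).
Hypotheses (uH : uncountable H) (rH : regular_card H).

Local Notation small A := (card_lt A H).

Lemma H_inf : infinite_set H.
Proof. by move=> /finite_set_countable. Qed.

Lemma H0 : exists h, H h.
Proof.
apply: contrapT => nh; apply: uH.
have -> : H = set0 by apply/seteqP; split => // z hz; apply: nh; exists z.
exact: countable0.
Qed.

Lemma small_eq (U : Type) (A : set U) (V : Type) (B : set V) :
  A #= B -> small B -> small A.
Proof.
move=> e [h1 h2]; split; first by rewrite (card_le_eql e).
by rewrite (card_le_eqr e).
Qed.

Lemma small_le (U : Type) (A : set U) (V : Type) (B : set V) :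
  A #<= B -> small B -> small A.
Proof.
move=> e [h1 h2]; split; first exact: card_le_trans e h1.
by move=> h; apply: h2; apply: card_le_trans h e.
Qed.

Lemma small_finite (U : Type) (A : set U) : finite_set A -> small A.
Proof.
move=> fA; split.
  have [n hn] := (finite_set_leP A).1 fA.
  apply: card_le_trans hn _; apply: card_le_trans (subset_card_le (@subsetT _ `I_n)) _.
  exact/infiniteP/H_inf.
by move=> h; apply: H_inf; apply: card_le_finite h fA.
Qed.

Lemma reg' (U I : Type) (X : set U) (F : I -> set U) : X #<= H ->
  small [set: I] -> (forall i, F i `<=` X /\ small (F i)) ->
  small (\bigcup_i F i).
Proof.
move=> XH sI hF; have [h0 _] := H0.
have [f [fXH finj]] := card_le_fun h0 XH.
have injS (S : set U) : S `<=` X -> {in S &, injective f}.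
  by move=> SX a b /set_mem Sa /set_mem Sb; apply: finj; [apply: SX|apply: SX].
pose G i := f @` F i.
have hG i : G i `<=` H /\ small (G i).
  have [FX sF] := hF i; split; first by move=> _ [u Fu <-]; apply: fXH; apply: FX.
  exact: small_eq (inj_card_eq (injS _ FX)) sF.
have := rH sI hG => sU.
have UX : \bigcup_i F i `<=` X by move=> u [i _ Fu]; have [FX _] := hF i; exact: FX.
apply: small_eq (card_esym (inj_card_eq (injS _ UX))) _.
have -> : f @` (\bigcup_i F i) = \bigcup_i G i.
  apply/seteqP; split; first by move=> _ [u [i _ Fu] <-]; exists i => //; exists u.
  by move=> _ [i _ [u Fu <-]]; exists u => //; exists i.
exact: sU.
Qed.

Lemma smallU (U : Type) (X : set U) (A1 A2 : set U) : X #<= H ->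
  A1 `<=` X -> A2 `<=` X -> small A1 -> small A2 -> small (A1 `|` A2).
Proof.
move=> XH s1 s2 h1 h2.
have -> : A1 `|` A2 = \bigcup_(b : bool) (if b then A1 else A2).
  apply/seteqP; split; first by move=> u [h|h]; [exists true|exists false].
  by move=> u [[] _ h]; [left|right].
apply: reg' XH _ _; first exact/small_finite/finite_finset.
by case.
Qed.

Lemma big_of_not_small (U : Type) (Y : set U) : Y #<= H -> ~ small Y -> H #<= Y.
Proof. by move=> YH ns; apply: contrapT => nb; apply: ns; split. Qed.

Lemma bigD (U : Type) (X Y A : set U) : X #<= H -> Y `<=` X -> H #<= Y ->
  small A -> H #<= (Y `\` A).
Proof.
move=> XH YX HY sA; apply: contrapT => nb.
have sYA : small (Y `\` A).
  split => //; apply: card_le_trans XH; apply: subset_card_le.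
  by move=> u [Yu _]; exact: YX.
have sAY : small (A `&` Y).
  by apply: small_le sA; apply: subset_card_le => u [].
have := smallU XH (fun u h => YX u (proj1 h)) (fun u h => YX u (proj2 h)) sYA sAY.
move=> [_ nH]; apply: nH; apply: card_le_trans HY _; apply: subset_card_le.
by move=> u Yu; have [Au|nAu] := pselect (A u); [right|left].
Qed.

Lemma big_nonempty (U : Type) (Y : set U) : H #<= Y -> exists y, Y y.
Proof.
move=> HY; apply: contrapT => ne.
have E : Y = set0 by apply/seteqP; split => // z hz; apply: ne; exists z.
have [h Hh] := H0; rewrite E in HY; move/card_le0P: HY => E'.
by rewrite E' in Hh.
Qed.

Lemma big_two (U : Type) (Y : set U) : H #<= Y ->
  exists y1 y2, [/\ Y y1, Y y2 & y1 <> y2].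
Proof.
move=> HY; have [y1 Y1] := big_nonempty HY.
apply: contrapT => ne; apply: H_inf; apply: card_le_finite HY _.
apply: sub_finite_set (finite_set1 y1) => y Yy.
by apply: contrapT => yn; apply: ne; exists y1, y; split => // e; apply: yn; rewrite e.
Qed.

Lemma big_piece (U I : Type) (X : set U) (F : I -> set U) : X #<= H ->
  small [set: I] -> (forall i, F i `<=` X) -> H #<= \bigcup_i F i ->
  exists i, H #<= F i.
Proof.
move=> XH sI FX hU; apply: contrapT => ne.
have [_ nU] := reg' XH sI (fun i => conj (FX i) (conj (card_le_trans (subset_card_le (FX i)) XH)
  (fun h => ne (ex_intro _ i h)))).
exact: nU.
Qed.

Lemma small_nat : small [set: nat].
Proof. by split; [exact/infiniteP/H_inf|exact: uH]. Qed.

End Card.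


Section Delta.
Variables (T : choiceType) (H : set T).
Hypotheses (uH : uncountable H) (rH : regular_card H).

Local Notation small A := (card_lt A H).

Lemma zorn_disj (U : Type) (S : set U) (conf : U -> U -> Prop) :
  (forall F : set U, F `<=` S ->
     (forall a b, F a -> F b -> a <> b -> ~ conf a b) -> small F ->
     exists u, [/\ S u, ~ F u & forall a, F a -> ~ conf u a /\ ~ conf a u]) ->
  exists F : set U, [/\ F `<=` S,
     (forall a b, F a -> F b -> a <> b -> ~ conf a b) & ~ small F].
Proof.
move=> hyp.
pose P (F : set U) := F `<=` S /\ (forall a b, F a -> F b -> a <> b -> ~ conf a b).
have [|A [[AS pA] mA]] := @Zorn_bigcup _ P.
  move=> Fs FsP tot; split.
    by move=> u [F FF Fu]; have [FS _] := FsP _ FF; exact: FS.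
  move=> a b [F1 F1F a1] [F2 F2F b2] ab.
  have [s12|s21] := tot _ _ F1F F2F.
    by have [_ p] := FsP _ F2F; apply: p => //; exact: s12.
  by have [_ p] := FsP _ F1F; apply: p => //; exact: s21.
exists A; split => // sA.
have [u [Su nAu hu]] := hyp A AS pA sA.
apply: (mA (u |` A)).
  split; first by move=> z Az; right.
  by move=> h; apply: nAu; apply: h; left.
split; first by move=> z [->|Az]; [exact: Su|exact: AS].
move=> a b [->|Aa] [->|Ab] ab //.
- by have [] := hu _ Ab.
- by have [] := hu _ Aa.
- exact: pA.
Qed.

Lemma disj_select (Y : set T) (A : T -> {fset T}) : Y `<=` H -> H #<= Y ->
  (forall x, small [set e | Y e /\ x \in A e]) ->
  exists Y', [/\ Y' `<=` Y, H #<= Y' &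
    forall e e' x, Y' e -> Y' e' -> e <> e' -> x \in A e -> x \in A e' -> False].
Proof.
move=> YH HY sx.
have HH : H #<= H by [].
have [|F [FY pF nsF]] := @zorn_disj _ Y (fun a b => exists x, x \in A a /\ x \in A b).
  move=> F FY pF sF.
  pose V x := [set e | Y e /\ x \in A e].
  have VH x : V x `<=` H by move=> e [Ye _]; exact: YH.
  pose W := \bigcup_(s : set_type F) \bigcup_(i : set_type [set` A (set_val s)]) V (set_val i).
  have sW : small W.
    apply: (reg' uH rH HH).
      apply: small_eq (card_setT F) sF.
    move=> s; split.
      by move=> e [i _ Vi]; exact: VH Vi.
    apply: (reg' uH rH HH); first exact: small_eq (card_setT _) (small_finite uH (finite_fset _)).
    by move=> i; split; [exact: VH|exact: sx].
  have sWF : small (W `|` F).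
    apply: (smallU uH rH HH _ _ sW sF).
      by move=> e [s _ [i _ [Ye _]]]; exact: YH.
    by move=> e Fe; exact: YH (FY _ Fe).
  have [u [Yu nWFu]] := big_nonempty uH (bigD uH rH (subset_card_le YH) (@subset_refl _ Y) HY sWF).
  exists u; split => //; first by move=> Fu; apply: nWFu; right.
  move=> a Fa; split.
    move=> [x [xu xa]]; apply: nWFu; left.
    exists (SigSub (mem_set Fa)) => //; exists (SigSub (@mem_set _ [set` A a] x xa)) => //.
  move=> [x [xa xu]]; apply: nWFu; left.
  exists (SigSub (mem_set Fa)) => //; exists (SigSub (@mem_set _ [set` A a] x xa)) => //.
exists F; split => //.
  apply: big_of_not_small => //.
  by apply: card_le_trans (subset_card_le FY) (subset_card_le YH).
by move=> e e' x Fe Fe' ee' xe xe'; apply: (pF _ _ Fe Fe' ee'); exists x.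
Qed.

Lemma delta_n n : forall (Y : set T) (A : T -> {fset T}), Y `<=` H -> H #<= Y ->
  (forall e, Y e -> (#|` A e| <= n)%N) ->
  exists Y' (R : {fset T}), [/\ Y' `<=` Y, H #<= Y' &
    forall e e' x, Y' e -> Y' e' -> e <> e' -> x \in A e -> x \in A e' -> x \in R].
Proof.
elim: n => [|n IH] Y A YH HY hn.
  exists Y, fset0; split => // e e' x Ye _ _ xe.
  by move: (hn e Ye); rewrite leqn0 cardfs_eq0 => /eqP Ae; rewrite Ae in xe.
have [[x bx]|nb] := pselect (exists x, H #<= [set e | Y e /\ x \in A e]).
  pose Y1 := [set e | Y e /\ x \in A e].
  have Y1H : Y1 `<=` H by move=> e [Ye _]; exact: YH.
  have hn1 : forall e, Y1 e -> (#|` (A e `\ x)%fset| <= n)%N.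
    move=> e [Ye xe]; have := hn e Ye; rewrite (cardfsD1 x (A e)) xe; lia.
  have [Y' [R [s1 b1 h1]]] := IH Y1 (fun e => (A e `\ x)%fset) Y1H bx hn1.
  exists Y', (x |` R)%fset; split => //; first by move=> e /s1 [].
  move=> e e' z Ye Ye' ee' ze ze'; rewrite !inE.
  have [->//|zx] := eqVneq z x; rewrite /=.
  by apply: (h1 e e' z) => //; rewrite !inE zx.
have sx : forall x, small [set e | Y e /\ x \in A e].
  move=> x; split; first by apply: subset_card_le => e [Ye _]; exact: YH.
  by move=> h; apply: nb; exists x.
have [Y' [s1 b1 h1]] := disj_select YH HY sx.
exists Y', fset0; split => // e e' x Ye Ye' ee' xe xe'.
by exfalso; apply: (h1 e e' x).
Qed.

Lemma delta (Y : set T) (A : T -> {fset T}) : Y `<=` H -> H #<= Y ->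
  exists Y' (R : {fset T}), [/\ Y' `<=` Y, H #<= Y' &
    forall e e' x, Y' e -> Y' e' -> e <> e' -> x \in A e -> x \in A e' -> x \in R].
Proof.
move=> YH HY.
have HH : H #<= H by [].
have [n bn] : exists n, H #<= [set e | Y e /\ #|` A e| = n].
  apply: (big_piece uH rH HH (small_nat uH)).
    by move=> n e [Ye _]; exact: YH.
  apply: card_le_trans HY _; apply: subset_card_le => e Ye.
  by exists #|` A e|.
have [Y' [R [s1 b1 h1]]] := @delta_n n _ A (fun e h => YH e (proj1 h)) bn
  (fun e h => eq_leq (proj2 h)).
by exists Y', R; split => //; move=> e /s1 [].
Qed.
End Delta.


Section Core.
Variables (T : choiceType) (ind : set T -> Prop).
Hypothesis ax : matroid_axioms ind.
Variables (H B B' : set T).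
Hypotheses (uH : uncountable H) (rH : regular_card H) (iB : ind B)
  (HB : H `<=` ~` B).
Variables (Y : set T) (R : {fset T}) (Cf : T -> {fset T}).
Hypotheses (YH : Y `<=` H) (HY : H #<= Y) (RB : forall x, x \in R -> B x).
Hypotheses (cC : forall e, Y e -> is_circuit ind [set` Cf e])
  (eC : forall e, Y e -> e \in Cf e)
  (CB : forall e x, Y e -> x \in Cf e -> x = e \/ B x)
  (dC : forall e e' x, Y e -> Y e' -> e <> e' -> x \in Cf e -> x \in Cf e' -> x \in R)
  (bC : forall e, Y e -> exists2 b, b \in Cf e & B' b)
  (gC : forall e x, Y e -> x \in Cf e -> x \notin R -> ~ B' x).

Local Notation circ C := (is_circuit ind [set` C]).
Local Notation small A := (card_lt A H).

Definition P e := (Cf e `\` R)%fset.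
Definition Q e := (P e `\ e)%fset.
Definition PG (G : {fset T}) := (\bigcup_(g <- G) P g)%fset.
Definition QG (G : {fset T}) := (\bigcup_(g <- G) Q g)%fset.

Lemma PGP x G : reflect (exists2 g, g \in G & x \in P g) (x \in PG G).
Proof.
apply: (iffP (bigfcupP _ _ _ _)) => [[g /andP[gG _] xg]|[g gG xg]].
  by exists g.
by exists g => //; rewrite gG.
Qed.

Lemma QGP x G : reflect (exists2 g, g \in G & x \in Q g) (x \in QG G).
Proof.
apply: (iffP (bigfcupP _ _ _ _)) => [[g /andP[gG _] xg]|[g gG xg]].
  by exists g.
by exists g => //; rewrite gG.
Qed.

Lemma notB e : Y e -> ~ B e.
Proof. by move=> Ye; apply: HB; apply: YH. Qed.

Lemma eP e : Y e -> e \in P e.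
Proof.
move=> Ye; rewrite !inE eC // andbT; apply/negP => /RB; exact: notB.
Qed.

Lemma QB e x : Y e -> x \in Q e -> B x.
Proof.
move=> Ye; rewrite !inE => /and3P [xe _ xC].
by have [exe|//] := CB Ye xC; move: xe; rewrite exe eqxx.
Qed.

Lemma Pdisj e e' x : Y e -> Y e' -> e <> e' -> x \in P e -> x \in P e' -> False.
Proof.
move=> Ye Ye' ee'; rewrite !inE => /andP [nR xC] /andP [_ xC'].
by move: nR; rewrite (dC Ye Ye' ee' xC xC').
Qed.

Lemma HCf e x : Y e -> x \in Cf e -> Y x -> x = e.
Proof. by move=> Ye xC Yx; have [//|Bx] := CB Ye xC; exfalso; exact: (notB Yx). Qed.

Lemma CfRP e x : x \in Cf e -> x \in R \/ x \in P e.
Proof. by move=> xC; rewrite !inE xC andbT; case: (x \in R); [left|right]. Qed.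

Lemma P_ind e : Y e -> ind [set` P e].
Proof.
move=> Ye; apply: (circ_proper (cC Ye)).
have [b bCf Bb] := bC Ye.
have bR : b \in R by apply: contrapT => /negP nbR; exact: (gC Ye bCf nbR Bb).
rewrite fproperEneq fsubsetDl andbT; apply/eqP => E.
by move: bCf; rewrite -E !inE bR.
Qed.

Lemma ind_bound (G : {fset T}) : (forall g, g \in G -> Y g) ->
  ind [set` PG G] -> (#|` G| <= #|` R|)%N.
Proof.
move=> GY iPG.
have iI : ind [set` (R `|` QG G)%fset].
  apply: (indS ax iB) => x /=; rewrite inE => /orP [/RB //|/QGP [g gG xQ]].
  exact: QB (GY _ gG) xQ.
have le : (#|` PG G| <= #|` (R `|` QG G)%fset|)%N.
  rewrite leqNgt; apply/negP => lt.
  have [x [xPG nxI ix]] := augment ax iI iPG lt.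
  move/PGP: xPG => [g gG xPg].
  have xg : x = g.
    have [//|nxg] := eqVneq x g; exfalso; move: nxI => /negP; apply.
    by rewrite in_fsetU; apply/orP; right; apply/QGP; exists g => //; apply/fsetD1P.
  subst x; have Yg := GY _ gG.
  have [nCg _] := cC Yg; apply: nCg; apply: (indS ax ix) => y /= yC.
  have [yR|yP] := CfRP yC; first by right; rewrite /= in_fsetU yR.
  have [->|nyg] := eqVneq y g; first by left.
  by right; rewrite /= in_fsetU; apply/orP; right; apply/QGP; exists g => //; apply/fsetD1P.
have EP : PG G = (G `|` QG G)%fset.
  apply/fsetP => x; apply/idP/idP.
    move=> /PGP [g gG xP]; rewrite in_fsetU; have [xg|nxg] := eqVneq x g.
      by rewrite xg gG.
    by apply/orP; right; apply/QGP; exists g => //; apply/fsetD1P.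
  rewrite in_fsetU => /orP [xG|/QGP [g gG /fsetD1P [_ a]]]; apply/PGP.
    by exists x => //; apply: eP; apply: GY.
  by exists g.
have I0 : (G `&` QG G)%fset = fset0.
  apply/fsetP => x; rewrite in_fsetI in_fset0; apply/negP => /andP [xG /QGP [g gG xQ]].
  have [xg|nxg] := eqVneq x g; first by move: xQ; rewrite xg fsetD11.
  move: xQ => /fsetD1P [_ a].
  have Px : x \in P x by apply: eP; apply: GY.
  by apply: (Pdisj (GY _ gG) (GY _ xG) _ a Px) => e; move: nxg; rewrite e eqxx.
have h1 := cardfsUI G (QG G); rewrite I0 cardfs0 addn0 -EP in h1.
have h2 := cardfsUI R (QG G).
lia.
Qed.

Lemma QP e x : x \in Q e -> x \in P e.
Proof. by move=> /fsetD1P []. Qed.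

Lemma PnR e x : x \in P e -> x \notin R.
Proof. by rewrite inE => /andP []. Qed.

Lemma PCf e x : x \in P e -> x \in Cf e.
Proof. by rewrite inE => /andP []. Qed.

Lemma Q_ind es (G : {fset T}) : Y es -> (forall g, g \in G -> Y g /\ g <> es) ->
  ind [set` PG G] -> ind [set` (Q es `|` PG G)%fset].
Proof.
move=> Yes GY iPG; apply: contrapT => dep.
have [D [sD cD]] := circuit_in dep.
have key : forall D0 : {fset T}, circ D0 ->
    (forall x, x \in D0 -> [\/ x \in Q es, x \in R | x \in PG G]) ->
    (exists2 q, q \in D0 & q \in Q es) -> False.
  move=> D0; have [n] := ubnP #|` (D0 `&` G)%fset|.
  elim: n D0 => // n IH D0 lt cD0 sD0 [q qD qQ].
  have [E0|ne] := eqVneq (D0 `&` G)%fset fset0.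
    have [nD0 _] := cD0; apply: nD0; apply: (indS ax iB) => x /= xD.
    have [xQ|xR|/PGP [g gG xP]] := sD0 _ xD.
    - exact: QB Yes xQ.
    - exact: RB.
    - have [xg|nxg] := eqVneq x g.
        by move: E0 => /fsetP /(_ x); rewrite in_fsetI in_fset0 xD xg gG.
      by apply: (QB (proj1 (GY _ gG))); apply/fsetD1P.
  have [g] := fset0Pn _ ne; rewrite in_fsetI => /andP [gD gG].
  have [Yg gnes] := GY _ gG.
  have nqC : q \notin Cf g.
    apply/negP => qC; have qP := QP qQ.
    have [qR|qPg] := CfRP qC; first by move: (PnR qP); rewrite qR.
    exact: (Pdisj Yg Yes gnes qPg qP).
  have [D' [cD' sD' qD']] := strong_elim ax cD0 (cC Yg) gD (eC Yg) qD nqC.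
  apply: (IH D') => //; last by exists q.
    have sub : ((D' `&` G) `<=` (D0 `&` G) `\ g)%fset.
      apply/fsubsetP => y; rewrite in_fsetI => /andP [yD' yG].
      have := fsubsetP sD' y yD'; rewrite !inE => /andP [yg /orP [yD0|yC]].
        by rewrite yg yD0 yG.
      by move: yg; rewrite (HCf Yg yC (proj1 (GY _ yG))) eqxx.
    have gDG : g \in (D0 `&` G)%fset by rewrite in_fsetI gD gG.
    have := card_lt_sub gDG sub; move: lt; clear; lia.
  move=> x xD'; have := fsubsetP sD' x xD'; rewrite in_fsetD1 in_fsetU.
  move=> /andP [_ /orP [xD0|xC]]; first exact: sD0.
  have [xR|xP] := CfRP xC; first by constructor 2.
  by constructor 3; apply/PGP; exists g.
apply: (key D cD).
  by move=> x /(fsubsetP sD); rewrite in_fsetU => /orP [h|h]; [constructor 1|constructor 3].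
apply: contrapT => nq; have [nD _] := cD; apply: nD; apply: (indS ax iPG) => x /= xD.
have := fsubsetP sD x xD; rewrite in_fsetU => /orP [xQ|//].
by exfalso; apply: nq; exists x.
Qed.

Lemma trace_pig (U : Type) (X : set U) (f : U -> {fset T}) (s : seq T) :
  X #<= H -> H #<= X -> exists X', [/\ X' `<=` X, H #<= X' &
    forall a b x, X' a -> X' b -> x \in s -> (x \in f a) = (x \in f b)].
Proof.
elim: s X => [|y s IH] X XH HX.
  by exists X; split.
have [X1 [s1 b1 h1]] := IH X XH HX.
have X1H : X1 #<= H := card_le_trans (subset_card_le s1) XH.
have [b hb] := @big_piece _ H uH rH _ bool X1 (fun b => [set a | X1 a /\ (y \in f a) = b])
  X1H (small_finite uH finite_finset) (fun b a h => proj1 h)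
  (card_le_trans b1 (subset_card_le (fun a X1a => ex_intro2 _ _ (y \in f a) I (conj X1a erefl)))).
exists [set a | X1 a /\ (y \in f a) = b]; split => //.
  by move=> a [X1a _]; exact: s1.
move=> a c x [X1a ya] [X1c yc]; rewrite in_cons => /orP [/eqP ->|xs].
  by rewrite ya yc.
exact: h1.
Qed.

Lemma core_main : exists es (D : set (set T)) (K : set T),
  [/\ Y es, delta_system D K, D #= H & (forall C, D C -> is_circuit ind C)] /\
  [/\ (forall C, D C -> C `<=` \bigcup_(e in Y) [set` Cf e]), K es &
      K `<=` [set` Cf es] `\` B'].
Proof.
pose Bnd (Y0 : set T) m := forall G : {fset T}, (forall g, g \in G -> Y0 g) ->
  ind [set` PG G] -> (#|` G| <= m)%N.
pose Pm m := exists Y0, [/\ Y0 `<=` Y, H #<= Y0 & Bnd Y0 m].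
have hex : exists m, `[< Pm m >].
  by exists #|` R|; apply/asboolP; exists Y; split => // G GY iG; exact: ind_bound.
case: (ex_minnP hex) => m /asboolP [Y0 [Y0Y HY0 bY0]] minm.
have Y0H : Y0 #<= H by apply: subset_card_le => y /Y0Y /YH.
have [es Y0es] := big_nonempty uH HY0.
have Yes : Y es := Y0Y _ Y0es.
pose Y1 := Y0 `\ es.
have Y1Y : Y1 `<=` Y by move=> y [/Y0Y].
have Y1H : Y1 `<=` H by move=> y /Y1Y /YH.
have HH : H #<= H by [].
pose good (G : {fset T}) := [/\ (forall g, g \in G -> Y1 g), G != fset0 &
  exists D : {fset T}, [/\ circ D, es \in D & (D `<=` P es `|` PG G)%fset]].
have goodex : forall Y', Y' `<=` Y1 -> H #<= Y' ->
    exists G, good G /\ (forall g, g \in G -> Y' g).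
  move=> Y' Y'Y1 HY'.
  have PG1 : [set` PG [fset es]%fset] `<=` [set` P es].
    by move=> x /= /PGP [g]; rewrite inE => /eqP ->.
  case: m bY0 minm => [|m'] bY0 minm.
    exfalso; have := bY0 [fset es]%fset.
    have h1 : forall g, g \in [fset es]%fset -> Y0 g by move=> g; rewrite inE => /eqP ->.
    by move=> /(_ h1 (indS ax (P_ind Yes) PG1)); rewrite cardfs1.
  have [G [GY' iG ltG]] : exists G : {fset T}, [/\ (forall g, g \in G -> Y' g),
      ind [set` PG G] & (m' < #|` G|)%N].
    apply: contrapT => h.
    have : (m'.+1 <= m')%N.
      apply: minm; apply/asboolP; exists Y'; split.
      - by move=> y /Y'Y1 /Y1Y.
      - exact: HY'.
      move=> G GY iG; rewrite leqNgt; apply/negP => lt; apply: h; exists G; split => //.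
    by rewrite ltnn.
  have GY1 g : g \in G -> Y1 g by move=> /GY'; apply: Y'Y1.
  have nesG : es \notin G by apply/negP => /GY1 [_]; apply.
  have leG : (#|` G| <= m'.+1)%N by apply: bY0 => // g /GY1 [].
  have ndep : ~ ind [set` (P es `|` PG G)%fset].
    move=> iX.
    have : (#|` (es |` G)%fset| <= m'.+1)%N.
      apply: bY0.
        by move=> g; rewrite in_fset1U => /orP [/eqP ->//|/GY1 []].
      apply: (indS ax iX) => x /= /PGP [g]; rewrite in_fset1U in_fsetU.
      move=> /orP [/eqP -> -> //|gG xP]; apply/orP; right; apply/PGP; exists g => //.
    by rewrite cardfsU1 nesG; move: ltG; clear; lia.
  have [D [sD cD]] := circuit_in ndep.
  exists G; split => //; split => //.
    by rewrite -cardfs_gt0; move: ltG; clear; lia.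
  exists D; split => //.
  apply: contrapT => /negP nesD.
  have [nD _] := cD; apply: nD.
  have GYn : forall g, g \in G -> Y g /\ g <> es.
    move=> g /GY1 [Y0g gn]; split; first exact: Y0Y.
    by move=> e; apply: gn; rewrite e.
  apply: (indS ax (Q_ind Yes GYn (indS ax iG (fun x h => h)))) => x /= xD.
  have := fsubsetP sD x xD; rewrite !in_fsetU => /orP [xP|->]; last by rewrite orbT.
  have [xe|nxe] := eqVneq x es; first by move: nesD; rewrite -xe xD.
  by apply/orP; left; apply/fsetD1P.
pose conf (G1 G2 : {fset T}) := exists x, x \in G1 /\ x \in G2.
have [|F [Fgood pF nsF]] := @zorn_disj T H _ good conf.
  move=> F Fgood pF sF.
  pose U := \bigcup_(s : set_type F) [set` set_val s].
  have sU : small U.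
    apply: (reg' uH rH HH); first exact: small_eq (card_setT F) sF.
    move=> s; have [GY1 _ _] := Fgood _ (set_valP s); split.
      by move=> x /= /GY1 /Y1H.
    exact/small_finite/finite_fset.
  have HY1 : H #<= Y1.
    apply: (bigD uH rH Y0H _ HY0 (small_finite uH (@finite_set1 _ es))); exact: subset_refl.
  have HY' : H #<= Y1 `\` U.
    apply: (bigD uH rH (subset_card_le Y1H) _ HY1 sU); exact: subset_refl.
  have [G [gG GY']] := goodex _ (@subDsetl _ Y1 U) HY'.
  exists G; split => //.
    move=> FG; have [_ ne _] := gG; have [g gG'] := fset0Pn _ ne.
    have [_ nU] := GY' g gG'; apply: nU.
    by exists (SigSub (mem_set FG)) => //.
  move=> a Fa; split.
    move=> [x [xG xa]]; have [_ nU] := GY' x xG; apply: nU.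
    by exists (SigSub (mem_set Fa)).
  move=> [x [xa xG]]; have [_ nU] := GY' x xG; apply: nU.
  by exists (SigSub (mem_set Fa)).
pose phi (G : {fset T}) := xget es (fun x => x \in G).
have phiG G : F G -> phi G \in G.
  move=> FG; have [_ ne _] := Fgood _ FG; have [g gG] := fset0Pn _ ne.
  by apply: (@xgetPex _ es (fun x => x \in G)); exists g.
have phi_inj : {in F &, injective phi}.
  move=> G1 G2 /set_mem F1 /set_mem F2 e; apply: contrapT => ne.
  by apply: (pF _ _ F1 F2 ne); exists (phi G1); split; [exact: phiG|rewrite e; exact: phiG].
have FH : F #<= H.
  rewrite -(card_le_eql (inj_card_eq phi_inj)); apply: subset_card_le.
  move=> _ [G FG <-]; have [GY1 _ _] := Fgood _ FG; exact/Y1H/GY1/phiG.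
have HF : H #<= F by apply: big_of_not_small.
pose Df (G : {fset T}) := xget fset0
  (fun D : {fset T} => [/\ circ D, es \in D & (D `<=` P es `|` PG G)%fset]).
have hDf G : F G -> [/\ circ (Df G), es \in Df G & (Df G `<=` P es `|` PG G)%fset].
  by move=> FG; have [_ _ ex] := Fgood _ FG; exact: xgetPex ex.
have Dout G : F G -> exists2 x, x \in Df G & x \notin P es.
  move=> FG; have [cD _ _] := hDf G FG; apply: contrapT => h; have [nD _] := cD.
  apply: nD; apply: (indS ax (P_ind Yes)) => x /= xD.
  by apply: contrapT => /negP nx; apply: h; exists x.
have inter G1 G2 x : F G1 -> F G2 -> G1 <> G2 -> x \in Df G1 -> x \in Df G2 ->
    x \in P es.
  move=> F1 F2 ne x1 x2; have [_ _ s1] := hDf _ F1; have [_ _ s2] := hDf _ F2.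
  move: (fsubsetP s1 x x1) (fsubsetP s2 x x2); rewrite !in_fsetU.
  move=> /orP [//|/PGP [g1 g1G xP1]] /orP [//|/PGP [g2 g2G xP2]].
  exfalso; have [GY1 _ _] := Fgood _ F1; have [GY2 _ _] := Fgood _ F2.
  have [g12|ng12] := eqVneq g1 g2.
    by apply: (pF _ _ F1 F2 ne); exists g1; split => //; rewrite g12.
  apply: (Pdisj (Y1Y _ (GY1 _ g1G)) (Y1Y _ (GY2 _ g2G)) _ xP1 xP2) => e.
  by move: ng12; rewrite e eqxx.
have Dinj : {in F &, injective Df}.
  move=> G1 G2 /set_mem F1 /set_mem F2 e; apply: contrapT => ne.
  have [x xD nxP] := Dout _ F1.
  by move: nxP; rewrite (inter _ _ _ F1 F2 ne xD) // -e.
have [F' [F'F HF' trF]] := trace_pig Df (P es) FH HF.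
have [G0 F'G0] := big_nonempty uH HF'.
pose K := [set x | x \in Df G0 /\ x \in P es].
pose D := [set [set` Df G] | G in F'].
have injF' : {in F' &, injective (fun G => [set` Df G])}.
  move=> a b /set_mem Fa /set_mem Fb /set_fset_inj e.
  by apply: Dinj => //; apply/mem_set; exact: F'F.
have F'H : F' #= H.
  by apply/card_eqPle; split => //; exact: card_le_trans (subset_card_le F'F) FH.
exists es, D, K; split; split => //.
- split.
    have [G1 [G2 [F1 F2 ne]]] := big_two uH HF'.
    exists [set` Df G1], [set` Df G2]; split; [by exists G1|by exists G2|].
    move=> e; apply: ne; apply: injF' => //; exact: mem_set.
  move=> C1 C2 [G1 F1 <-] [G2 F2 <-] ne.
  have nG : G1 <> G2 by move=> e; apply: ne; rewrite e.
  apply/seteqP; split.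
    move=> x [/= x1 x2]; have xP := inter _ _ _ (F'F _ F1) (F'F _ F2) nG x1 x2.
    by split => //; rewrite (trF G0 G1 x).
  move=> x [x0 xP]; split => /=.
    by rewrite -(trF G0 G1 x).
  by rewrite -(trF G0 G2 x).
- exact: card_eq_trans (inj_card_eq injF') F'H.
- by move=> C [G FG <-]; have [c _ _] := hDf _ (F'F _ FG).
- move=> C [G FG <-] x /= xD; have [_ _ sD] := hDf _ (F'F _ FG).
  move: (fsubsetP sD x xD); rewrite in_fsetU => /orP [xP|/PGP [g gG xP]].
    by exists es => //; exact: PCf xP.
  have [GY1 _ _] := Fgood _ (F'F _ FG).
  by exists g; [exact: Y1Y _ (GY1 _ gG)|exact: PCf xP].
- by split; [have [_ h _] := hDf _ (F'F _ F'G0)|exact: eP Yes].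
- by move=> x [_ xP]; split; [exact: PCf xP|exact: gC Yes (PCf xP) (PnR xP)].
Qed.
End Core.


Theorem main_choice (T : choiceType) (M : finitary_matroid T) (B H B' : set T) :
  base M B -> H `<=` ~` B ->
  uncountable H -> regular_card H ->
  B' `<=` B -> card_lt B' H ->
  (forall e, H e -> fcirc M e B `&` B' !=set0) ->
  exists e_star, exists D : set (set T), exists K : set T,
    [/\ H e_star, delta_system D K, D #= H & (forall C, D C -> circuit M C)] /\
    [/\ \bigcup_(C in D) C `<=` \bigcup_(e in H) fcirc M e B,
        K e_star &
        K `<=` fcirc M e_star B `\` B'].
Proof.
move=> [iB mB] HB uH rH B'B cB' hyp.
have ax := indep_axioms M; have fin := @indep_finitary _ M.
have hC e : H e -> [/\ circuit M (fcirc M e B), fcirc M e B `<=` e |` B &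
    fcirc M e B `&` B' !=set0].
  move=> He; have ex : exists C, circuit M C /\ C `<=` e |` B.
    apply: contrapT => nex; have := hyp e He; rewrite /fcirc xgetPN.
      by move=> [x [[] _]].
    by move=> C hC'; apply: nex; exists C.
  by have [c s] := xgetPex set0 ex; split => //; exact: hyp e He.
pose Cf e := fset_set (fcirc M e B).
have fC e : H e -> finite_set (fcirc M e B).
  by move=> He; have [c _ _] := hC e He; exact: fin.
have CfE e : H e -> [set` Cf e] = fcirc M e B by move=> He; rewrite fset_setK //; exact: fC.
have inCf e x : H e -> x \in Cf e <-> fcirc M e B x.
  by move=> He; rewrite in_fset_set; [rewrite in_setE|exact: fC].
have eC e : H e -> e \in Cf e.
  move=> He; apply/inCf => //; apply: contrapT => ne.
  have [[nC _] sC _] := hC e He; apply: nC; apply: (indS ax iB) => x xC.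
  by have [xe|//] := sC x xC; move: xC; rewrite xe.
have CB e x : H e -> x \in Cf e -> x = e \/ B x.
  by move=> He /(inCf e x He); have [_ s _] := hC e He; move/s.
have [Y' [R0 [Y'H HY' dR]]] := delta uH rH Cf (@subset_refl _ H) (card_lexx H).
pose R := fset_set ([set` R0] `&` B).
have fR : finite_set ([set` R0] `&` B) by apply: finite_setIl; exact: finite_fset.
have inR x : x \in R <-> (x \in R0 /\ B x).
  by rewrite in_fset_set // in_setE.
have RB x : x \in R -> B x by move=> /inR [].
have dC' e e' x : Y' e -> Y' e' -> e <> e' -> x \in Cf e -> x \in Cf e' -> x \in R.
  move=> Ye Ye' ee' xe xe'; apply/inR; split; first exact: dR xe xe'.
  have He := Y'H _ Ye; have He' := Y'H _ Ye'.
  have [xe2|//] := CB e x He xe; subst x.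
  have [ee2|Be] := CB e' e He' xe'; first by exfalso; apply: ee'.
  by exfalso; exact: HB He Be.
pose Bad := [set e | Y' e /\ exists x, [/\ x \in Cf e, x \notin R & B' x]].
pose psi e := xget e (fun x => [/\ x \in Cf e, x \notin R & B' x]).
have psiP e : Bad e -> [/\ psi e \in Cf e, psi e \notin R & B' (psi e)].
  by move=> [_ ex]; exact: xgetPex ex.
have psi_inj : {in Bad &, injective psi}.
  move=> e e' /set_mem Be /set_mem Be' E; apply: contrapT => ne.
  have [c1 r1 _] := psiP e Be; have [c2 _ _] := psiP e' Be'.
  by move: r1; rewrite (dC' e e' _ (proj1 Be) (proj1 Be') ne c1) // E.
have BadB' : Bad #<= B'.
  rewrite -(card_le_eql (inj_card_eq psi_inj)); apply: subset_card_le.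
  by move=> _ [e Be <-]; have [_ _ b] := psiP e Be.
have sBad : card_lt Bad H := small_le BadB' cB'.
pose Y := Y' `\` Bad.
have HY : H #<= Y := bigD uH rH (card_lexx H) Y'H HY' sBad.
have YH : Y `<=` H by move=> e [/Y'H].
have cC e : Y e -> is_circuit (indep M) [set` Cf e].
  by move=> Ye; rewrite CfE; [have [c _ _] := hC e (YH _ Ye)|exact: YH].
have eC' e : Y e -> e \in Cf e by move=> Ye; exact: eC (YH _ Ye).
have CB' e x : Y e -> x \in Cf e -> x = e \/ B x by move=> Ye; exact: CB (YH _ Ye).
have dC e e' x : Y e -> Y e' -> e <> e' -> x \in Cf e -> x \in Cf e' -> x \in R.
  by move=> [Ye _] [Ye' _]; exact: dC'.
have bC e : Y e -> exists2 b, b \in Cf e & B' b.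
  move=> Ye; have [_ _ [b [bC bB']]] := hC e (YH _ Ye).
  by exists b => //; apply/inCf => //; exact: YH.
have gC e x : Y e -> x \in Cf e -> x \notin R -> ~ B' x.
  by move=> [Ye nB] xC nR bx; apply: nB; split => //; exists x.
have [es [D [K [[Yes dD DH cD] [uD Kes sK]]]]] :=
  core_main ax uH rH iB HB YH HY RB cC eC' CB' dC bC gC.
have Hes := YH _ Yes.
exists es, D, K; split; split => //.
- move=> x [C DC xC]; have [e Ye xe] := uD C DC x xC.
  by exists e; [exact: YH|rewrite -CfE //; exact: YH].
- by rewrite -CfE.
Qed.

Theorem lemma3p4 (E : Type) (M : finitary_matroid E) (B H B' : set E) :
  base M B -> H `<=` ~` B ->
  uncountable H -> regular_card H ->
  B' `<=` B -> card_lt B' H ->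
  (forall e, H e -> fcirc M e B `&` B' !=set0) ->
  exists e_star, exists D : set (set E), exists K : set E,
    [/\ H e_star, delta_system D K, D #= H & (forall C, D C -> circuit M C)] /\
    [/\ \bigcup_(C in D) C `<=` \bigcup_(e in H) fcirc M e B,
        K e_star &
        K `<=` fcirc M e_star B `\` B'].
Proof. exact: (@main_choice {classic E} M B H B'). Qed.
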